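(* Let $\Sigma$ be a connected orientable compact surface with $n$ boundary components $\{1,\dots,n\}$, $T$ an ideal triangulation with edges $E$ and faces $F$, and $l^0\in\mathbb{R}_{>0}^{|E|}$ a hyperbolic metric on $(\Sigma,T)$. Consider the combinatorial Yamabe flow $$\frac{dw_i(t)}{dt}=B_i(t),\qquad w_i(0)=0,\qquad i=1,\dots,n,$$ where $B_i(t)$ is the length of boundary component $i$ of the hyperbolic metric determined by $w(t)$ via $\cosh\frac{l_{ij}}{2}=e^{w_i+w_j}\cosh\frac{l^0_{ij}}{2}$. Then this flow is the gradient flow of a concave function of $w$ (defined on the set $\mathcal{W}$ of $w$ for which all $l_{ij}>0$), and $\sum_{i=1}^n B_i(t)^2$ is decreasing in $t$.
   Context: An ideal triangulation: glue finitely many hexagons, each with three pairwise non-adjacent sides colored red, along red sides in pairs; faces are the images of hexagons, edges the images of red sides, boundary arcs the images of the other sides. Each edge joins boundary components $i,j$ and is denoted $ij$; each face meets boundary components $i,j,k$ and is denoted $ijk$. A hyperbolic metric is a vector $l\in\mathbb{R}_{>0}^{|E|}$; each face $ijk$ is realized as the unique hyperbolic right-angled hexagon with pairwise non-adjacent sides of lengths $l_{jk},l_{ki},l_{ij}$, and $\theta^i_{jk}$ is the length of the side on boundary component $i$ (opposite to $jk$). Then $B_i=\sum_{ijk\in F}\theta^i_{jk}$. *)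

(* Defs.v *)
From mathcomp Require Import all_boot.
From Stdlib Require Import Reals.
From Coquelicot Require Import Coquelicot.

Set Implicit Arguments.
Unset Strict Implicit.
Unset Printing Implicit Defensive.

(* Faces are hexagons, indexed by a finite type F.  A red side of a    *)
(* hexagon is a "dart" (f,k), k : 'I_3.  The boundary arc number k of  *)
(* face f is the one opposite to red side k; it lies between red sides *)
(* k+1 and k+2 (indices mod 3), so red side k has its endpoints on the *)
(* arcs k+1 and k+2.  The gluing is a fixed-point-free involution      *)
(* [glue] on darts; red sides are glued orientation-reversingly (with  *)
(* the cyclic orientation red k, arc k+2, red k+1, arc k, ... of every *)
(* hexagon), so the resulting surface is orientable.                   *)
(* [bd f k : 'I_n] is the boundary component containing arc k of f.   *)

Definition dart (F : finType) := (F * 'I_3)%type.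

Definition succ3 (k : 'I_3) : 'I_3 := ordS k.

(* arc x and arc y are glued at an endpoint (one direction) *)
Definition arc_rel (F : finType) (glue : dart F -> dart F) : rel (dart F) :=
  fun x y => [exists d : dart F,
    (x == (d.1, succ3 d.2)) && (y == ((glue d).1, succ3 (succ3 (glue d).2)))].

Definition arc_adj (F : finType) (glue : dart F -> dart F) : rel (dart F) :=
  fun x y => arc_rel glue x y || arc_rel glue y x.

Definition face_adj (F : finType) (glue : dart F -> dart F) : rel F :=
  fun f g => [exists k : 'I_3, (glue (f, k)).1 == g].

Definition ideal_triangulation (n : nat) (F : finType)
    (glue : dart F -> dart F) (bd : F -> 'I_3 -> 'I_n) : Prop :=
  (forall d, glue (glue d) = d) /\
  (forall d, glue d <> d) /\
  [/\ 
      (forall f g : F, connect (face_adj glue) f g),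
      (* bd is constant along boundary components ... *)
      (forall x y : dart F, arc_adj glue x y -> bd x.1 x.2 = bd y.1 y.2),
      (* ... separates distinct boundary components ... *)
      (forall x y : dart F, bd x.1 x.2 = bd y.1 y.2 -> connect (arc_adj glue) x y)
    & (* ... and every label is used: there are exactly n components *)
      (forall i : 'I_n, exists x : dart F, bd x.1 x.2 = i)].

(* A hyperbolic metric: a positive length on each edge, i.e. a positive
   function on darts that is invariant under the gluing. *)
Definition hyperbolic_metric (F : finType) (glue : dart F -> dart F)
    (l : dart F -> R) : Prop :=
  (forall d, 0 < l d)%R /\ (forall d, l (glue d) = l d).

Definition acosh (x : R) : R := ln (x + sqrt (x * x - 1)).

(* Right-angled hexagon with pairwise non-adjacent sides a, b, c: the length
   of the side opposite to the side of length a. *)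
Definition hex_opp (a b c : R) : R :=
  acosh ((cosh b * cosh c + cosh a) / (sinh b * sinh c)).

Definition theta (F : finType) (l : dart F -> R) (f : F) (k : 'I_3) : R :=
  hex_opp (l (f, k)) (l (f, succ3 k)) (l (f, succ3 (succ3 k))).

Definition Blen (n : nat) (F : finType) (bd : F -> 'I_3 -> 'I_n)
    (l : dart F -> R) (i : 'I_n) : R :=
  \big[Rplus/0%R]_(x : dart F | bd x.1 x.2 == i) theta l x.1 x.2.

Definition lw (n : nat) (F : finType) (bd : F -> 'I_3 -> 'I_n)
    (l0 : dart F -> R) (w : 'I_n -> R) (d : dart F) : R :=
  let i := bd d.1 (succ3 d.2) in
  let j := bd d.1 (succ3 (succ3 d.2)) in
  (2 * acosh (exp (w i + w j) * cosh (l0 d / 2)))%R.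

Definition inW (n : nat) (F : finType) (bd : F -> 'I_3 -> 'I_n)
    (l0 : dart F -> R) (w : 'I_n -> R) : Prop :=
  forall d, (0 < lw bd l0 w d)%R.

Definition Bw (n : nat) (F : finType) (bd : F -> 'I_3 -> 'I_n)
    (l0 : dart F -> R) (w : 'I_n -> R) (i : 'I_n) : R :=
  Blen bd (lw bd l0 w) i.

Definition sumB2 (n : nat) (F : finType) (bd : F -> 'I_3 -> 'I_n)
    (l0 : dart F -> R) (w : 'I_n -> R) : R :=
  \big[Rplus/0%R]_(i : 'I_n) (Bw bd l0 w i * Bw bd l0 w i)%R.

Definition upd (n : nat) (w : 'I_n -> R) (i : 'I_n) (s : R) : 'I_n -> R :=
  fun j => if j == i then s else w j.

Definition concave_on (n : nat) (D : ('I_n -> R) -> Prop)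
    (Phi : ('I_n -> R) -> R) : Prop :=
  forall x y, D x -> D y -> forall t : R, (0 <= t <= 1)%R ->
    (t * Phi x + (1 - t) * Phi y <= Phi (fun i => t * x i + (1 - t) * y i))%R.

Definition has_gradient_on (n : nat) (D : ('I_n -> R) -> Prop)
    (Phi : ('I_n -> R) -> R) (G : ('I_n -> R) -> 'I_n -> R) : Prop :=
  forall w, D w -> forall i : 'I_n,
    is_derive (fun s : R => Phi (upd w i s)) (w i) (G w i).

(* Main.v *)
From HB Require Import structures.
Require Import Defs.
From mathcomp Require Import all_boot.
From Stdlib Require Import Reals Lra Psatz FunctionalExtensionality.
From Coquelicot Require Import Coquelicot.
Local Open Scope R_scope.

Ltac nra' := first [nra | (intro; nra) | (simpl; nra)].

Section Basics.
Implicit Types (f g : R -> R) (t c df dg : R).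

Lemma D_plus f g t df dg : is_derive f t df -> is_derive g t dg ->
  is_derive (fun t => f t + g t) t (df + dg).
Proof. intros; now apply: is_derive_plus. Qed.
Lemma D_mult f g t df dg : is_derive f t df -> is_derive g t dg ->
  is_derive (fun t => f t * g t) t (df * g t + f t * dg).
Proof. intros; apply: is_derive_mult => //. intros; apply Rmult_comm. Qed.
Lemma D_comp f g t df dg : is_derive f (g t) df -> is_derive g t dg ->
  is_derive (fun t => f (g t)) t (dg * df).
Proof. intros; now apply: is_derive_comp. Qed.
Lemma D_const c t : is_derive (fun _ => c) t 0.
Proof. apply: is_derive_const. Qed.
Lemma D_id t : is_derive (fun t => t) t 1.
Proof. apply: is_derive_id. Qed.
Lemma D_ext f g t df : (forall t, f t = g t) -> is_derive f t df -> is_derive g t df.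
Proof. intros H; apply: is_derive_ext => //. Qed.
Lemma D_eq f (t df df' : R) : df = df' -> is_derive f t df -> is_derive f t df'.
Proof. by intros ->. Qed.

Lemma yx_pos {x} : 1 < x -> 0 < sqrt (x*x-1).
Proof. intros; apply sqrt_lt_R0; nra. Qed.

Lemma yx_inv {x} : 1 < x -> / (x + sqrt (x*x-1)) = x - sqrt (x*x-1).
Proof.
  intros H. have hs := yx_pos H. have h2 := sqrt_sqrt (x*x-1) ltac:(nra).
  field_simplify_eq; [nra|nra].
Qed.

Lemma yx_gt1 {x} : 1 < x -> 1 < x + sqrt (x*x-1).
Proof. intros H; have := yx_pos H; lra. Qed.

Lemma x_of_y {x} : 1 < x -> x = (x + sqrt (x*x-1) + / (x + sqrt (x*x-1)))/2.
Proof. intros H; rewrite yx_inv //; lra. Qed.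
Lemma s_of_y {x} : 1 < x -> sqrt (x*x-1) = (x + sqrt (x*x-1) - / (x + sqrt (x*x-1)))/2.
Proof. intros H; rewrite yx_inv //; lra. Qed.

Lemma acosh_ln x : acosh x = ln (x + sqrt (x*x-1)).
Proof. reflexivity. Qed.

Lemma exp_2ln y : 0 < y -> exp (2 * ln y) = y * y.
Proof. intros H. replace (2 * ln y) with (ln y + ln y) by ring.
  rewrite exp_plus exp_ln //. Qed.
Lemma exp_m2ln y : 0 < y -> exp (- (2 * ln y)) = / (y * y).
Proof. intros H. rewrite exp_Ropp exp_2ln //. Qed.

Lemma cosh2acosh {x} : 1 < x -> let y := x + sqrt (x*x-1) in
  cosh (2 * acosh x) = (y*y + /(y*y))/2.
Proof. intros H y. rewrite /cosh acosh_ln -/y exp_2ln ?exp_m2ln //;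
  have := yx_gt1 H; rewrite -/y; lra. Qed.
Lemma sinh2acosh {x} : 1 < x -> let y := x + sqrt (x*x-1) in
  sinh (2 * acosh x) = (y*y - /(y*y))/2.
Proof. intros H y. rewrite /sinh acosh_ln -/y exp_2ln ?exp_m2ln //;
  have := yx_gt1 H; rewrite -/y; lra. Qed.

Lemma is_derive_cosh t : is_derive cosh t (sinh t).
Proof.
  apply: (D_ext (fun t => (exp t + exp (- t)) / 2)). by [].
  rewrite /sinh. auto_derive => //. field.
Qed.
Lemma is_derive_sinh t : is_derive sinh t (cosh t).
Proof.
  apply: (D_ext (fun t => (exp t - exp (- t)) / 2)). by [].
  rewrite /cosh. auto_derive => //. field.
Qed.
Lemma is_derive_acosh x : 1 < x -> is_derive acosh x (/ sqrt (x*x-1)).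
Proof.
  intros H. have hs := yx_pos H. have hy := yx_gt1 H.
  apply: (D_ext (fun x => ln (x + sqrt (x*x-1)))). by [].
  auto_derive; replace (x*x + - (1)) with (x*x-1) by ring. split; [nra|split; [lra|done]].
  field; lra.
Qed.

Lemma D_cosh g t dg : is_derive g t dg -> is_derive (fun t => cosh (g t)) t (dg * sinh (g t)).
Proof. intros; apply: D_comp => //; apply is_derive_cosh. Qed.
Lemma D_sinh g t dg : is_derive g t dg -> is_derive (fun t => sinh (g t)) t (dg * cosh (g t)).
Proof. intros; apply: D_comp => //; apply is_derive_sinh. Qed.
Lemma D_exp g t dg : is_derive g t dg -> is_derive (fun t => exp (g t)) t (dg * exp (g t)).
Proof. intros; apply: D_comp => //; apply is_derive_exp. Qed.
Lemma D_acosh g t dg : is_derive g t dg -> 1 < g t ->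
  is_derive (fun t => acosh (g t)) t (dg * / sqrt (g t * g t - 1)).
Proof. intros; apply: D_comp => //; apply is_derive_acosh => //. Qed.

Lemma cosh_gt1 x : 0 < x -> 1 < cosh x.
Proof. intros H. rewrite /cosh. have h1 := exp_ineq1 x ltac:(lra).
  have h2 : exp (-x) = / exp x by rewrite exp_Ropp.
  have h3 := exp_pos x. rewrite h2.
  apply (Rmult_lt_reg_r (2 * exp x)); [lra|]. field_simplify; [|lra]. nra.
Qed.
Lemma cosh_pos x : 0 < cosh x.
Proof. rewrite /cosh; have := exp_pos x; have := exp_pos (-x); lra. Qed.

Definition i0 : 'I_3 := @Ordinal 3 0 isT.
Definition i1 : 'I_3 := @Ordinal 3 1 isT.
Definition i2 : 'I_3 := @Ordinal 3 2 isT.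

Lemma ord3_cases (k : 'I_3) : k = i0 \/ k = i1 \/ k = i2.
Proof.
  case: k => [[|[|[|m]]] hk]; [left|right;left|right;right|]; try (apply: val_inj; done).
  done.
Qed.

Lemma succ3_0 : succ3 i0 = i1. Proof. by apply: val_inj. Qed.
Lemma succ3_1 : succ3 i1 = i2. Proof. by apply: val_inj. Qed.
Lemma succ3_2 : succ3 i2 = i0. Proof. by apply: val_inj. Qed.

Lemma succ3_3 (k : 'I_3) : succ3 (succ3 (succ3 k)) = k.
Proof. by case: (ord3_cases k) => [->|[->|->]]; apply: val_inj. Qed.

Definition sum3 (g : 'I_3 -> R) := g i0 + g i1 + g i2.

Lemma sum3_rot (g : 'I_3 -> R) k : sum3 g = g k + g (succ3 k) + g (succ3 (succ3 k)).
Proof. rewrite /sum3; case: (ord3_cases k) => [->|[->|->]];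
  rewrite ?succ3_0 ?succ3_1 ?succ3_2 ?succ3_0 ?succ3_1 ?succ3_2; ring. Qed.

Section Face.
Variable l : 'I_3 -> R.

Definition xf (a : 'I_3 -> R) m := exp (a (succ3 m) + a (succ3 (succ3 m))) * cosh (l m / 2).
Definition Lf a m := 2 * acosh (xf a m).
Definition th a k := hex_opp (Lf a k) (Lf a (succ3 k)) (Lf a (succ3 (succ3 k))).
Definition inD a := forall m, 1 < xf a m.
Definition Xc a m := cosh (Lf a m).
Definition Sc a m := sinh (Lf a m).
Definition Dd a := Xc a i0 * Xc a i0 + Xc a i1 * Xc a i1 + Xc a i2 * Xc a i2
   + 2 * Xc a i0 * Xc a i1 * Xc a i2 - 1.
Definition J a k m :=
  let q := succ3 k in let r := succ3 q in
  let Xp := Xc a k in let Xq := Xc a q in let Xr := Xc a r in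
  if m == k then - (2 / sqrt (Dd a)) * ((Xp*Xq + Xr)/(Xq - 1) + (Xp*Xr+Xq)/(Xr-1))
  else if m == q then 2 * (Xr - Xp - Xq - 1)/((Xr-1) * sqrt (Dd a))
  else 2 * (Xq - Xp - Xr - 1)/((Xq-1) * sqrt (Dd a)).

Definition dxf a (da : 'I_3 -> R) m := xf a m * (da (succ3 m) + da (succ3 (succ3 m))).
Definition dLf a da m := 2 * (dxf a da m * / sqrt (xf a m * xf a m - 1)).
Definition Qf a k := (Xc a (succ3 k) * Xc a (succ3 (succ3 k)) + Xc a k) /
   (Sc a (succ3 k) * Sc a (succ3 (succ3 k))).
Definition dQf a da k :=
  let q := succ3 k in let r := succ3 q in
  let dC m := dLf a da m * Sc a m in let dS m := dLf a da m * Xc a m in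
  ((dC q * Xc a r + Xc a q * dC r + dC k) * (Sc a q * Sc a r)
   - (Xc a q * Xc a r + Xc a k) * (dS q * Sc a r + Sc a q * dS r)) / (Sc a q * Sc a r)^2.
Definition dth a da k := dQf a da k * / sqrt (Qf a k * Qf a k - 1).

Lemma xf_pos a m : 0 < xf a m.
Proof. rewrite /xf; have := exp_pos (a (succ3 m) + a (succ3 (succ3 m))); have := cosh_pos (l m / 2); nra. Qed.

Lemma Sc_pos {a m} : 1 < xf a m -> 0 < Sc a m.
Proof. intros H. rewrite /Sc /Lf sinh2acosh //. have := yx_gt1 H.
  set y := _ + _ => hy; clearbody y. have hyy : 1 < y*y by nra. apply (Rmult_lt_reg_r (2*(y*y))); [nra|].
  field_simplify; nra'. Qed.
Lemma Xc_gt1 {a m} : 1 < xf a m -> 1 < Xc a m.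
Proof. intros H. rewrite /Xc /Lf cosh2acosh //. have := yx_gt1 H.
  set y := _ + _ => hy; clearbody y. have hyy : 1 < y*y by nra. apply (Rmult_lt_reg_r (2*(y*y))); [nra|].
  field_simplify; nra'. Qed.
Lemma XS {a m} : 1 < xf a m -> Xc a m * Xc a m - Sc a m * Sc a m = 1.
Proof. intros H. rewrite /Xc /Sc /Lf cosh2acosh // sinh2acosh //. have := yx_gt1 H.
  set y := _ + _ => hy; clearbody y. field. nra'. Qed.

Lemma Qf_gt1 a k : inD a -> 1 < Qf a k.
Proof. intros H. rewrite /Qf.
  have h1 := Sc_pos (H (succ3 k)). have h2 := Sc_pos (H (succ3 (succ3 k))).
  have h3 := Xc_gt1 (H k). have h4 := Xc_gt1 (H (succ3 k)). have h5 := Xc_gt1 (H (succ3 (succ3 k))).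
  have e1 := XS (H (succ3 k)). have e2 := XS (H (succ3 (succ3 k))).
  set Sq := Sc a (succ3 k) in h1 e1 *. set Sr := Sc a _ in h2 e2 *.
  set Xq := Xc a (succ3 k) in h4 e1 *. set Xr := Xc a _ in h5 e2 *. clearbody Sq Sr Xq Xr.
  apply (Rmult_lt_reg_r (Sq*Sr)); [nra|]. field_simplify; [|nra'].
  have hh2 : Sq * Sr < Xq * Xr.
  { have f1 : Xq*Xq = 1 + Sq*Sq by lra. have f2 : Xr*Xr = 1 + Sr*Sr by lra.
    have hh : (Sq*Sr)*(Sq*Sr) < (Xq*Xr)*(Xq*Xr).
    { replace ((Xq*Xr)*(Xq*Xr)) with ((Xq*Xq)*(Xr*Xr)) by ring. rewrite f1 f2. nra. }
    have p1 : 0 < Xq*Xr by nra. have p2 : 0 < Sq*Sr by nra. nra. }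
  nra.
Qed.

Section Path.
Variables (a : R -> 'I_3 -> R) (t : R) (da : 'I_3 -> R).
Hypothesis Hda : forall m, is_derive (fun t => a t m) t (da m).

Lemma D_xf m : is_derive (fun t => xf (a t) m) t (dxf (a t) da m).
Proof.
  rewrite /xf /dxf. apply: D_eq; last first.
  apply: D_mult; [apply: D_exp; apply: D_plus; apply: Hda | apply: D_const].
  cbv beta; rewrite /xf; ring.
Qed.

Lemma D_Lf m : 1 < xf (a t) m -> is_derive (fun t => Lf (a t) m) t (dLf (a t) da m).
Proof.
  intros H. rewrite /Lf /dLf. apply: is_derive_scal. apply: D_acosh => //. apply: D_xf.
Qed.

Lemma D_th k : inD (a t) -> is_derive (fun t => th (a t) k) t (dth (a t) da k).
Proof.
  intros H. rewrite /th /hex_opp /dth.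
  have hq := Sc_pos (H (succ3 k)). have hr := Sc_pos (H (succ3 (succ3 k))).
  apply: D_acosh; last by apply: Qf_gt1.
  rewrite /dQf. apply: is_derive_div.
  - apply: D_plus. apply: D_mult; apply: D_cosh; apply: D_Lf; apply: H.
    apply: D_cosh; apply: D_Lf; apply: H.
  - apply: D_mult; apply: D_sinh; apply: D_Lf; apply: H.
  - rewrite -/(Sc _ _). have : 0 < Sc (a t) (succ3 k) * Sc (a t) (succ3 (succ3 k)) by nra.
    rewrite /Sc. lra.
Qed.
End Path.
End Face.

End Basics.

Lemma succ3_neq1 (k : 'I_3) : (succ3 k == k) = false.
Proof. by case: (ord3_cases k) => [->|[->|->]]. Qed.
Lemma succ3_neq2 (k : 'I_3) : (succ3 (succ3 k) == k) = false.
Proof. by case: (ord3_cases k) => [->|[->|->]]. Qed.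
Lemma succ3_neq3 (k : 'I_3) : (succ3 (succ3 k) == succ3 k) = false.
Proof. by case: (ord3_cases k) => [->|[->|->]]. Qed.

Lemma Dd_rot l a k : Dd l a = let q := succ3 k in let r := succ3 q in
  Xc l a k * Xc l a k + Xc l a q * Xc l a q + Xc l a r * Xc l a r
   + 2 * Xc l a k * Xc l a q * Xc l a r - 1.
Proof. rewrite /Dd /=; case: (ord3_cases k) => [->|[->|->]];
  rewrite ?succ3_0 ?succ3_1 ?succ3_2 ?succ3_0 ?succ3_1 ?succ3_2; ring. Qed.

Lemma Dd_pos l a : inD l a -> 0 < Dd l a.
Proof. intros H. rewrite /Dd. have := Xc_gt1 _ (H i0). have := Xc_gt1 _ (H i1).
  have := Xc_gt1 _ (H i2). move=> h2 h1 h0. have h01 : 1 < Xc l a i0 * Xc l a i1 by nra. nra. Qed.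

Lemma alg_path (yp yq yr dp dq dr sD : R) :
  1 < yp -> 1 < yq -> 1 < yr -> sD <> 0 ->
  let C y := (y*y + /(y*y))/2 in let S y := (y*y - /(y*y))/2 in
  let dL y d := 2 * ((y + /y)/2 * d * / ((y - /y)/2)) in
  let Cp := C yp in let Cq := C yq in let Cr := C yr in
  let Sp := S yp in let Sq := S yq in let Sr := S yr in
  let dLp := dL yp (dq + dr) in let dLq := dL yq (dr + dp) in let dLr := dL yr (dp + dq) in
  let dC dL S := dL * S in let dS dL C := dL * C in
  ((dC dLq Sq * Cr + Cq * dC dLr Sr + dC dLp Sp) * (Sq * Sr)
   - (Cq * Cr + Cp) * (dS dLq Cq * Sr + Sq * dS dLr Cr)) / (Sq * Sr)^2
  * / (sD / (Sq * Sr))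
  = - (2 / sD) * ((Cp*Cq + Cr)/(Cq - 1) + (Cp*Cr+Cq)/(Cr-1)) * dp
    + 2 * (Cr - Cp - Cq - 1)/((Cr-1) * sD) * dq
    + 2 * (Cq - Cp - Cr - 1)/((Cq-1) * sD) * dr.
Proof.
  intros hp hq hr hD. intros. subst C S dL Cp Cq Cr Sp Sq Sr dLp dLq dLr dC dS. cbv beta.
  have q1 : 1 < yp*yp by nra. have q2 : 1 < yq*yq by nra. have q3 : 1 < yr*yr by nra.
  field. repeat split; try assumption; nra'.
Qed.

Lemma sqrtQ l a k : inD l a -> sqrt (Qf l a k * Qf l a k - 1)
  = sqrt (Dd l a) / (Sc l a (succ3 k) * Sc l a (succ3 (succ3 k))).
Proof.
  intros H. have hD := Dd_pos _ _ H. rewrite (Dd_rot l a k) in hD *. cbv zeta in hD |- *.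
  have h1 := Sc_pos _ (H (succ3 k)). have h2 := Sc_pos _ (H (succ3 (succ3 k))).
  have e1 := XS _ (H (succ3 k)). have e2 := XS _ (H (succ3 (succ3 k))).
  rewrite /Qf.
  set Sq := Sc l a (succ3 k) in h1 e1 *. set Sr := Sc l a _ in h2 e2 *.
  set Xq := Xc l a (succ3 k) in e1 hD *. set Xr := Xc l a (succ3 (succ3 k)) in e2 hD *.
  set Xp := Xc l a k in hD *. clearbody Sq Sr Xq Xr Xp.
  have -> : (Xq * Xr + Xp) / (Sq * Sr) * ((Xq * Xr + Xp) / (Sq * Sr)) - 1
    = (Xp * Xp + Xq * Xq + Xr * Xr + 2 * Xp * Xq * Xr - 1) / ((Sq*Sr)^2).
  { have f1 : Sq*Sq = Xq*Xq - 1 by lra. have f2 : Sr*Sr = Xr*Xr - 1 by lra.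
    field_simplify; [|nra'|nra']. 
    replace (Sq^2) with (Sq*Sq) by ring. replace (Sr^2) with (Sr*Sr) by ring.
    rewrite f1 f2. field. split; nra'. }
  rewrite sqrt_div; [|lra|apply pow_lt; nra].
  rewrite sqrt_pow2 //. nra.
Qed.

Lemma yrep l a m : 1 < xf l a m -> exists y, 1 < y /\
  Xc l a m = (y*y + /(y*y))/2 /\ Sc l a m = (y*y - /(y*y))/2 /\
  sqrt (xf l a m * xf l a m - 1) = (y - /y)/2 /\ xf l a m = (y + /y)/2.
Proof.
  intros H. exists (xf l a m + sqrt (xf l a m * xf l a m - 1)).
  split; [by apply yx_gt1|]. rewrite /Xc /Sc /Lf cosh2acosh // sinh2acosh //.
  split; [done|split;[done|]]. split; [exact: s_of_y|exact: x_of_y].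
Qed.

Lemma dth_J l a da k : inD l a -> dth l a da k = sum3 (fun m => J l a k m * da m).
Proof.
  intros H. rewrite (sum3_rot _ k) /J eqxx succ3_neq1 eqxx succ3_neq2 succ3_neq3.
  rewrite /dth sqrtQ // /dQf /dLf /dxf succ3_3.
  have hD := Dd_pos _ _ H. have hsD : sqrt (Dd l a) <> 0 by have := sqrt_lt_R0 _ hD; lra.
  set sD := sqrt (Dd l a) in hsD *. clearbody sD.
  set q := succ3 k. set r := succ3 q.
  have [yp [hp [ep1 [ep2 [ep3 ep4]]]]] := yrep _ _ _ (H k).
  have [yq [hq [eq1 [eq2 [eq3 eq4]]]]] := yrep _ _ _ (H q).
  have [yr [hr [er1 [er2 [er3 er4]]]]] := yrep _ _ _ (H r).
  rewrite ep1 ep2 ep3 ep4 eq1 eq2 eq3 eq4 er1 er2 er3 er4.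
  have := alg_path _ _ _ (da k) (da q) (da r) _ hp hq hr hsD. cbv zeta. move=> ->. done.
Qed.

Lemma D_thJ l (a : R -> 'I_3 -> R) t da k :
  (forall m, is_derive (fun t => a t m) t (da m)) -> inD l (a t) ->
  is_derive (fun t => th l (a t) k) t (sum3 (fun m => J l (a t) k m * da m)).
Proof. intros Hd H. rewrite -dth_J //. apply: D_th => //. Qed.

Ltac s3 := rewrite ?succ3_0 ?succ3_1 ?succ3_2 ?succ3_0 ?succ3_1 ?succ3_2.

Lemma J_sym l a k m : J l a k m = J l a m k.
Proof.
  case: (ord3_cases k) => [->|[->|->]]; case: (ord3_cases m) => [->|[->|->]]; try done;
  rewrite /J; s3; simpl; rewrite /Rdiv; ring.
Qed.

Lemma alg_nsd X0 X1 X2 sD d0 d1 d2 : 1 < X0 -> 1 < X1 -> 1 < X2 -> 0 < sD ->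
  d0 * (- (2 / sD) * ((X0*X1 + X2)/(X1 - 1) + (X0*X2+X1)/(X2-1)) * d0
        + 2 * (X2 - X0 - X1 - 1)/((X2-1) * sD) * d1
        + 2 * (X1 - X0 - X2 - 1)/((X1-1) * sD) * d2)
  + d1 * (2 * (X2 - X1 - X0 - 1)/((X2-1) * sD) * d0
        - (2 / sD) * ((X1*X2 + X0)/(X2 - 1) + (X1*X0+X2)/(X0-1)) * d1
        + 2 * (X0 - X1 - X2 - 1)/((X0-1) * sD) * d2)
  + d2 * (2 * (X1 - X2 - X0 - 1)/((X1-1) * sD) * d0
        + 2 * (X0 - X2 - X1 - 1)/((X0-1) * sD) * d1
        - (2 / sD) * ((X2*X0 + X1)/(X0 - 1) + (X2*X1+X0)/(X1-1)) * d2) <= 0.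
Proof.
  intros h0 h1 h2 hs.
  remember (- (X1*d1*d1 + X2*d2*d2 + (X1+X2)*((d1+d2)*(d1+d2))/(X0-1))
           - (X0*d0*d0 + X2*d2*d2 + (X0+X2)*((d0+d2)*(d0+d2))/(X1-1))
           - (X0*d0*d0 + X1*d1*d1 + (X0+X1)*((d0+d1)*(d0+d1))/(X2-1))
           + 2*(d0*d1+d1*d2+d0*d2)) as M eqn:EM.
  match goal with |- ?L <= 0 => have -> : L = 2 / sD * M end.
  { rewrite EM. field. repeat split; nra'. }
  have f0 : 0 <= (X1+X2)*((d1+d2)*(d1+d2))/(X0-1).
  { clear EM; apply Rdiv_le_0_compat; [apply Rmult_le_pos; [lra|exact (Rle_0_sqr _)]|lra]. }
  have f1 : 0 <= (X0+X2)*((d0+d2)*(d0+d2))/(X1-1).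
  { clear EM; apply Rdiv_le_0_compat; [apply Rmult_le_pos; [lra|exact (Rle_0_sqr _)]|lra]. }
  have f2 : 0 <= (X0+X1)*((d0+d1)*(d0+d1))/(X2-1).
  { clear EM; apply Rdiv_le_0_compat; [apply Rmult_le_pos; [lra|exact (Rle_0_sqr _)]|lra]. }
  have hM : M <= 0.
  { have g0 : 0 <= (X0-1)*(d0*d0) by apply Rmult_le_pos; [lra|exact (Rle_0_sqr _)].
    have g1 : 0 <= (X1-1)*(d1*d1) by apply Rmult_le_pos; [lra|exact (Rle_0_sqr _)].
    have g2 : 0 <= (X2-1)*(d2*d2) by apply Rmult_le_pos; [lra|exact (Rle_0_sqr _)].
    have s0 := Rle_0_sqr (d0-d1). have s1 := Rle_0_sqr (d1-d2). have s2 := Rle_0_sqr (d0-d2).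
    rewrite /Rsqr in s0 s1 s2. rewrite EM. lra. }
  have : 0 < 2 / sD by apply Rdiv_lt_0_compat; lra.
  move=> h. have := Rmult_le_compat_l _ _ _ (Rlt_le _ _ h) hM. lra.
Qed.

Lemma J_nsd l a (d : 'I_3 -> R) : inD l a ->
  sum3 (fun k => d k * sum3 (fun m => J l a k m * d m)) <= 0.
Proof.
  intros H. have hD := Dd_pos _ _ H. have hs := sqrt_lt_R0 _ hD.
  have := alg_nsd _ _ _ _ (d i0) (d i1) (d i2) (Xc_gt1 _ (H i0)) (Xc_gt1 _ (H i1)) (Xc_gt1 _ (H i2)) hs.
  rewrite /sum3 /J; s3; simpl. lra.
Qed.

Lemma cont_exp y : continuous exp y.
Proof. apply: ex_derive_continuous. eexists; apply is_derive_exp. Qed.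
Lemma cont_cosh y : continuous cosh y.
Proof. apply: ex_derive_continuous. eexists; apply is_derive_cosh. Qed.
Lemma cont_sinh y : continuous sinh y.
Proof. apply: ex_derive_continuous. eexists; apply is_derive_sinh. Qed.
Lemma cont_acosh y : 1 < y -> continuous acosh y.
Proof. intros; apply: ex_derive_continuous. eexists; apply is_derive_acosh => //. Qed.
Lemma cont_sqrt y : 0 < y -> continuous sqrt y.
Proof. intros; apply: ex_derive_continuous. eexists.
  apply: (is_derive_sqrt (fun x => x)) => //. apply: is_derive_id. Qed.
Lemma cont_inv y : y <> 0 -> continuous Rinv y.
Proof. intros; apply: ex_derive_continuous. eexists.
  apply: (is_derive_inv (fun x => x)) => //. apply: is_derive_id. Qed.

Section FiltCont.
Context {T : Type} {FF : (T -> Prop) -> Prop} {HF : Filter FF}.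

Implicit Types (g h : T -> R).
Definition cF (g : T -> R) (y : R) := filterlim g FF (locally y).

Lemma cF_comp (f : R -> R) g y : continuous f y -> cF g y -> cF (fun z => f (g z)) (f y).
Proof. intros Hf Hg. rewrite /cF. apply: filterlim_comp; [apply Hg| apply Hf]. Qed.
Lemma cF_plus g h y1 y2 : cF g y1 -> cF h y2 -> cF (fun z => g z + h z) (y1 + y2).
Proof. intros H1 H2. apply: (filterlim_comp_2 _ _ Rplus H1 H2). apply: (@filterlim_plus R_AbsRing). Qed.
Lemma cF_mult g h y1 y2 : cF g y1 -> cF h y2 -> cF (fun z => g z * h z) (y1 * y2).
Proof. intros H1 H2. apply: (filterlim_comp_2 _ _ Rmult H1 H2). apply: (@filterlim_mult R_AbsRing). Qed.
Lemma cF_const c : cF (fun _ => c) c.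
Proof. apply: filterlim_const. Qed.
Lemma cF_ext (g h : T -> R) y : (forall z, g z = h z) -> cF g y -> cF h y.
Proof. intros E H. apply: filterlim_ext; [apply E|apply H]. Qed.
Lemma cF_opp g y : cF g y -> cF (fun z => - g z) (- y).
Proof. intros H. replace (-y) with (-1 * y) by ring.
  apply: (cF_ext _ _ _ _ (cF_mult _ _ _ _ (cF_const (-1)) H)). intros; ring. Qed.
Lemma cF_sub g h y1 y2 : cF g y1 -> cF h y2 -> cF (fun z => g z - h z) (y1 - y2).
Proof. intros H1 H2. apply: (cF_plus _ _ _ _ H1 (cF_opp _ _ H2)). Qed.
Lemma cF_inv g y : cF g y -> y <> 0 -> cF (fun z => / g z) (/ y).
Proof. intros H hn. apply: cF_comp => //. apply: cont_inv => //. Qed.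
Lemma cF_div g h y1 y2 : cF g y1 -> cF h y2 -> y2 <> 0 -> cF (fun z => g z / h z) (y1 / y2).
Proof. intros H1 H2 hn. apply: (cF_mult _ _ _ _ H1 (cF_inv _ _ H2 hn)). Qed.

Section Face.
Variable l : 'I_3 -> R.
Variables (a : T -> 'I_3 -> R) (a0 : 'I_3 -> R).
Hypothesis Ha : forall m, cF (fun z => a z m) (a0 m).
Hypothesis H0 : inD l a0.

Lemma cF_xf m : cF (fun z => xf l (a z) m) (xf l a0 m).
Proof. rewrite /xf. apply: cF_mult; [|apply: cF_const]. apply: cF_comp; [apply: cont_exp|].
  apply: cF_plus; apply: Ha. Qed.
Lemma cF_Lf m : cF (fun z => Lf l (a z) m) (Lf l a0 m).
Proof. rewrite /Lf. apply: cF_mult; [apply: cF_const|]. apply: cF_comp; [apply: cont_acosh; apply: H0|].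
  apply: cF_xf. Qed.
Lemma cF_Xc m : cF (fun z => Xc l (a z) m) (Xc l a0 m).
Proof. apply: cF_comp; [apply: cont_cosh|apply: cF_Lf]. Qed.
Lemma cF_Sc m : cF (fun z => Sc l (a z) m) (Sc l a0 m).
Proof. apply: cF_comp; [apply: cont_sinh|apply: cF_Lf]. Qed.
Lemma cF_Qf k : cF (fun z => Qf l (a z) k) (Qf l a0 k).
Proof. rewrite /Qf. apply: cF_div. apply: cF_plus; [apply: cF_mult|]; apply: cF_Xc.
  apply: cF_mult; apply: cF_Sc.
  have := Sc_pos _ (H0 (succ3 k)). have := Sc_pos _ (H0 (succ3 (succ3 k))). intros. nra.
Qed.
Lemma cF_th k : cF (fun z => th l (a z) k) (th l a0 k).
Proof. apply: (cF_comp acosh (fun z => Qf l (a z) k)); [apply: cont_acosh; apply: Qf_gt1 => //|apply: cF_Qf]. Qed.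
Lemma cF_sD : cF (fun z => sqrt (Dd l (a z))) (sqrt (Dd l a0)).
Proof. apply: cF_comp; [apply: cont_sqrt; apply: Dd_pos => //|].
  rewrite /Dd. repeat first [apply: cF_Xc | apply: cF_const | apply: cF_plus | apply: cF_mult | apply: cF_sub].
Qed.
Lemma cF_J k m : cF (fun z => J l (a z) k m) (J l a0 k m).
Proof.
  have hs := sqrt_lt_R0 _ (Dd_pos _ _ H0).
  have hX := fun m => Xc_gt1 _ (H0 m).
  rewrite /J. case: (m == k); [|case: (m == succ3 k)];
  repeat first [apply: cF_Xc | apply: cF_sD | apply: cF_const | apply: cF_div | apply: cF_inv | apply: cF_plus | apply: cF_mult | apply: cF_sub | apply: cF_opp];
  try (have := hX k; have := hX (succ3 k); have := hX (succ3 (succ3 k)); intros; nra).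
Qed.
End Face.
End FiltCont.

Lemma loc_gt1 (y : R) : 1 < y -> locally y (fun x => 1 < x).
Proof.
  intros H. have hp : 0 < y - 1 by lra.
  exists (mkposreal _ hp) => x /=. rewrite /ball /= /AbsRing_ball /abs /minus /plus /opp /=.
  move=> hx. have := Rabs_def2 _ _ hx. lra.
Qed.

Lemma ev_inD {T} {FF : (T -> Prop) -> Prop} {HF : Filter FF} l (a : T -> 'I_3 -> R) a0 :
  (forall m, cF (FF:=FF) (fun z => a z m) (a0 m)) -> inD l a0 -> FF (fun z => inD l (a z)).
Proof.
  intros Ha H0.
  have ev : forall m, FF (fun z => 1 < xf l (a z) m).
  { intros m. have := cF_xf l a a0 Ha m. move=> Hc. apply: Hc. apply: loc_gt1. apply H0. }
  apply: filter_imp; last first.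
  apply: filter_and; [apply (ev i0)|apply: filter_and; [apply (ev i1)|apply (ev i2)]].
  move=> z [h0 [h1 h2]] m. by case: (ord3_cases m) => [->|[->|->]].
Qed.

Lemma inD_scale l b s : (forall m, 0 < l m) -> inD l b -> 0 <= s <= 1 -> inD l (fun m => s * b m).
Proof.
  intros hl H hs m. have := H m. rewrite /xf.
  have hc := cosh_gt1 (l m / 2) ltac:(have := hl m; lra).
  set c := cosh _ in hc *. set be := b (succ3 m) + b (succ3 (succ3 m)).
  replace (s * b (succ3 m) + s * b (succ3 (succ3 m))) with (s * be) by (rewrite /be; ring).
  clearbody c be. intros h.
  case: (Rle_lt_dec 0 be) => hb.
  - have : 1 <= exp (s * be).
    { rewrite -exp_0. case: (Req_dec (s*be) 0) => [->|hne]; [lra|].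
      left; apply exp_increasing; nra. }
    nra.
  - have : exp be <= exp (s * be).
    { case: (Req_dec (s*be) be) => [->|hne]; [lra|]. left; apply exp_increasing; nra. }
    have := exp_pos be. nra.
Qed.

Lemma cF_fst (x y : R) : cF (FF := locally (x,y)) (fun z : R * R => fst z) x.
Proof. have := proj1 (continuity_2d_pt_filterlim _ x y) (continuity_2d_pt_id1 x y). done. Qed.
Lemma cF_snd (x y : R) : cF (FF := locally (x,y)) (fun z : R * R => snd z) y.
Proof. have := proj1 (continuity_2d_pt_filterlim _ x y) (continuity_2d_pt_id2 x y). done. Qed.
Lemma cF_id (x : R) : cF (FF := locally x) (fun z : R => z) x.
Proof. apply: filterlim_id. Qed.

Definition phi l (b : 'I_3 -> R) :=
  RInt (fun s => sum3 (fun k => th l (fun m => s * b m) k * b k)) 0 1.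

Section Pot.
Variables (l a v : 'I_3 -> R).
Hypothesis hl : forall m, 0 < l m.
Definition Pp u t := fun m => t * (a m + u * v m).
Definition fI u t := sum3 (fun k => th l (Pp u t) k * (a k + u * v k)).
Definition GI u t := sum3 (fun k => sum3 (fun m => J l (Pp u t) k m * (t * v m)) * (a k + u * v k)
   + th l (Pp u t) k * v k).

Lemma D_fI_u u t : inD l (Pp u t) -> is_derive (fun u => fI u t) u (GI u t).
Proof.
  intros H. have hP : forall m, is_derive (fun u => Pp u t m) u (t * v m).
  { intros m. rewrite /Pp. auto_derive => //. ring. }
  have hb : forall k, is_derive (fun u => a k + u * v k) u (v k).
  { intros k. auto_derive => //. ring. }
  rewrite /fI /GI /sum3.
  apply: D_plus; [apply: D_plus|];
  (apply: D_mult; [apply: (D_thJ l (fun u => Pp u t) u (fun m => t * v m)) => // | apply: hb]).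
Qed.

Lemma D_fI_t u t : inD l (Pp u t) -> ex_derive (fun t => fI u t) t.
Proof.
  intros H. have hP : forall m, is_derive (fun t => Pp u t m) t (a m + u * v m).
  { intros m. rewrite /Pp. auto_derive => //. ring. }
  eexists. rewrite /fI /sum3.
  apply: D_plus; [apply: D_plus|];
  (apply: D_mult; [apply: (D_thJ l (fun t => Pp u t) t (fun m => a m + u * v m)) => // | apply: D_const]).
Qed.
End Pot.

Ltac cFa := repeat first [ apply: cF_J | apply: cF_th | apply: cF_fst | apply: cF_snd | apply: cF_id
   | apply: cF_const | apply: cF_plus | apply: cF_mult ].

Lemma Rmin01 : Rmin 0 1 = 0. Proof. apply Rmin_left; lra. Qed.
Lemma Rmax01 : Rmax 0 1 = 1. Proof. apply Rmax_right; lra. Qed.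

Lemma phi_dir l a v u0 : (forall m, 0 < l m) -> inD l (fun m => a m + u0 * v m) ->
  is_derive (fun u => phi l (fun m => a m + u * v m)) u0
    (sum3 (fun k => th l (fun m => a m + u0 * v m) k * v k)).
Proof.
  intros hl H.
  have evb : locally u0 (fun y => inD l (fun m => a m + y * v m)).
  { apply: (ev_inD (FF := locally u0) l (fun y m => a m + y * v m)) => // m.
    apply: cF_plus; [apply: cF_const| apply: cF_mult; [apply: cF_id|apply: cF_const]]. }
  have inP : forall y t, inD l (fun m => a m + y * v m) -> 0 <= t <= 1 -> inD l (Pp a v y t).
  { intros y t hy ht. apply: (inD_scale _ _ _ hl hy ht). }
  change (is_derive (fun u => RInt (fun t => fI l a v u t) 0 1) u0
    (sum3 (fun k => th l (fun m => a m + u0 * v m) k * v k))).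
  apply: D_eq; last first.
  apply: is_derive_RInt_param.
  - apply: filter_imp evb. move=> y hy t. rewrite Rmin01 Rmax01 => ht.
    eexists. apply: D_fI_u. by apply inP.
  - move=> t. rewrite Rmin01 Rmax01 => ht.
    apply: (continuity_2d_pt_ext_loc (GI l a v)); last first.
    + apply/continuity_2d_pt_filterlim. rewrite /GI /sum3.
      have hc : forall m, cF (FF := locally (u0,t)) (fun z : R * R => Pp a v z.1 z.2 m) (Pp a v u0 t m).
      { move=> m. rewrite /Pp. cFa. }
      have hi := inP _ _ H ht.
      cFa; try exact hc; try exact hi.
    + apply (proj2 (locally_2d_locally _ _ _)).
      have hc : forall m, cF (FF := locally (u0,t)) (fun z : R * R => Pp a v z.1 z.2 m) (Pp a v u0 t m).
      { move=> m. rewrite /Pp. cFa. }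
      apply: filter_imp (ev_inD l _ _ hc (inP _ _ H ht)).
      move=> z hz. symmetry. apply: is_derive_unique. apply: D_fI_u => //.
  - apply: filter_imp evb. move=> y hy. apply: ex_RInt_continuous => z.
    rewrite Rmin01 Rmax01 => hz. apply: ex_derive_continuous. apply: D_fI_t. by apply inP.
  - rewrite (RInt_ext _ (GI l a v u0)); last first.
    { move=> t. rewrite Rmin01 Rmax01 => ht. apply: is_derive_unique. apply: D_fI_u.
      apply inP => //; lra. }
    pose Hf := fun t => t * sum3 (fun k => th l (Pp a v u0 t) k * v k).
    have hd : forall t, Rmin 0 1 <= t <= Rmax 0 1 -> is_derive Hf t (GI l a v u0 t).
    { move=> t. rewrite Rmin01 Rmax01 => ht. have hi := inP _ _ H ht.
      have hP : forall m, is_derive (fun t => Pp a v u0 t m) t (a m + u0 * v m).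
      { move=> m. rewrite /Pp. auto_derive => //. ring. }
      apply: D_eq; last first. rewrite /Hf.
      apply: D_mult; [apply: D_id|]. rewrite /sum3. apply: D_plus;[apply: D_plus|];
      (apply: D_mult; [apply: (D_thJ l (fun t => Pp a v u0 t) t (fun m => a m + u0 * v m)) => //| apply: D_const]).
      rewrite /GI /sum3. rewrite (J_sym l _ i1 i0) (J_sym l _ i2 i0) (J_sym l _ i2 i1).
      rewrite /Pp. ring. }
    have hc : forall t, Rmin 0 1 <= t <= Rmax 0 1 -> continuous (GI l a v u0) t.
    { move=> t. rewrite Rmin01 Rmax01 => ht. have hi := inP _ _ H ht.
      have hcc : forall m, cF (FF := locally t) (fun s : R => Pp a v u0 s m) (Pp a v u0 t m).
      { move=> m. rewrite /Pp. cFa. }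
      change (cF (FF:=locally t) (fun s => GI l a v u0 s) (GI l a v u0 t)).
      rewrite /GI /sum3. cFa; try exact hcc; try exact hi. }
    rewrite (is_RInt_unique _ _ _ _ (is_RInt_derive _ _ _ _ hd hc)).
    rewrite /Hf /minus /plus /opp /=.
    have -> : Pp a v u0 1 = (fun m => a m + u0 * v m).
    { apply: functional_extensionality => m. rewrite /Pp. ring. }
    ring.
Qed.

Lemma cont_of_der (g : R -> R) s d : is_derive g s d -> continuity_pt g s.
Proof. intros H. apply/continuity_pt_filterlim. apply: ex_derive_continuous. by exists d. Qed.

Lemma mvt01 (g : R -> R) (a b : R) (dg : R -> R) : a <= b ->
  (forall s, a <= s <= b -> is_derive g s (dg s)) ->
  exists c, a <= c <= b /\ g b - g a = dg c * (b - a).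
Proof.
  intros hab H. have := MVT_gen g a b dg.
  rewrite Rmin_left // Rmax_right //. apply.
  - move=> x hx. apply: H; lra.
  - move=> x hx. apply: cont_of_der. apply: H; lra.
Qed.

Lemma nonincr (h : R -> R) c1 c2 : 0 <= c1 -> c1 <= c2 -> c2 <= 1 ->
  (forall s, 0 <= s <= 1 -> exists dh, is_derive h s dh /\ dh <= 0) -> h c2 <= h c1.
Proof.
  intros h1 h2 h3 H.
  have hD : forall s, c1 <= s <= c2 -> is_derive h s (Derive h s).
  { move=> s hs. have [dh [hd _]] := H s ltac:(lra). apply: Derive_correct. by exists dh. }
  have [c [hc e]] := mvt01 h c1 c2 (Derive h) h2 hD.
  have [dh [hd hle]] := H c ltac:(lra). rewrite (is_derive_unique _ _ _ hd) in e.
  nra.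
Qed.

Lemma concave01 (g h : R -> R) t : (forall s, 0 <= s <= 1 -> is_derive g s (h s)) ->
  (forall s, 0 <= s <= 1 -> exists dh, is_derive h s dh /\ dh <= 0) -> 0 <= t <= 1 ->
  t * g 1 + (1 - t) * g 0 <= g t.
Proof.
  intros Hg Hh ht.
  have [c1 [hc1 e1]] := mvt01 g 0 t h ltac:(lra) ltac:(move=> s hs; apply: Hg; lra).
  have [c2 [hc2 e2]] := mvt01 g t 1 h ltac:(lra) ltac:(move=> s hs; apply: Hg; lra).
  have hm := nonincr h c1 c2 ltac:(lra) ltac:(lra) ltac:(lra) Hh.
  have : t * (1 - t) * (h c2 - h c1) <= 0.
  { have : 0 <= t * (1 - t) by nra. nra. }
  nra.
Qed.

Lemma xf_iff (be c : R) : 0 < c -> (1 < exp be * c <-> - ln c < be).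
Proof.
  intros hc. split => h.
  - apply: exp_lt_inv. rewrite exp_Ropp exp_ln //.
    apply (Rmult_lt_reg_r c) => //. have -> : /c * c = 1 by field; lra. lra.
  - have := exp_increasing _ _ h. rewrite exp_Ropp exp_ln // => h2.
    apply (Rmult_lt_reg_r (/c)); [by apply Rinv_0_lt_compat|].
    have -> : exp be * c * / c = exp be by field; lra. lra.
Qed.

Lemma inD_convex l x y s : inD l x -> inD l y -> 0 <= s <= 1 ->
  inD l (fun m => y m + s * (x m - y m)).
Proof.
  intros hx hy hs m. have := hx m. have := hy m. rewrite /xf.
  have hc := cosh_pos (l m / 2).
  rewrite !xf_iff //. intros h1 h2. clear hx hy hc. move: h1 h2. generalize (- ln (cosh (l m / 2))) (y (succ3 m)) (y (succ3 (succ3 m))) (x (succ3 m)) (x (succ3 (succ3 m))). move=> c y1 y2 x1 x2 h1 h2. have p2 : 0 <= s * (x1 + x2 - c) by apply Rmult_le_pos; lra.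
  case: (Rle_lt_or_eq_dec s 1 (proj2 hs)) => hs1; last by subst; lra.
  have p1 : 0 < (1 - s) * (y1 + y2 - c) by apply Rmult_lt_0_compat; lra. lra.
Qed.

Lemma phi_concave l x y t : (forall m, 0 < l m) -> inD l x -> inD l y -> 0 <= t <= 1 ->
  t * phi l x + (1 - t) * phi l y <= phi l (fun m => t * x m + (1 - t) * y m).
Proof.
  intros hl hx hy ht.
  pose g := fun s => phi l (fun m => y m + s * (x m - y m)).
  pose h := fun s => sum3 (fun k => th l (fun m => y m + s * (x m - y m)) k * (x k - y k)).
  have e1 : phi l x = g 1.
  { rewrite /g. f_equal. apply: functional_extensionality => m. ring. }
  have e0 : phi l y = g 0.
  { rewrite /g. f_equal. apply: functional_extensionality => m. ring. }
  have et : phi l (fun m => t * x m + (1 - t) * y m) = g t.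
  { rewrite /g. f_equal. apply: functional_extensionality => m. ring. }
  rewrite e1 e0 et. apply: concave01 => //.
  - move=> s hs. apply: (phi_dir l y (fun m => x m - y m) s hl). by apply: (inD_convex _ _ _ _ hx hy).
  - move=> s hs. have hi := inD_convex _ _ _ _ hx hy hs.
    eexists. split.
    + rewrite /h /sum3. apply: D_plus; [apply: D_plus|];
      (apply: D_mult; [apply: (D_thJ l (fun s m => y m + s * (x m - y m)) s (fun m => x m - y m)) => // | apply: D_const]).
      move=> m. auto_derive => //. ring.
      move=> m. auto_derive => //. ring.
      move=> m. auto_derive => //. ring.
    + have := J_nsd _ _ (fun m => x m - y m) hi. rewrite /sum3. move=> hh. lra.
Qed.

Lemma Rplus_assoc' : associative Rplus. Proof. move=> x y z; ring. Qed.
HB.instance Definition _ := Monoid.isComLaw.Build R 0 Rplus Rplus_assoc' Rplus_comm Rplus_0_l.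

Section BigR.
Variables (I : Type) (r : seq I) (P : pred I).

Lemma big_scale (c : R) (F : I -> R) :
  c * \big[Rplus/0]_(i <- r | P i) F i = \big[Rplus/0]_(i <- r | P i) (c * F i).
Proof.
  elim: r => [|x s IH]; rewrite ?big_nil ?big_cons; first ring.
  case: (P x); rewrite -IH; ring.
Qed.

Lemma big_le (F G : I -> R) : (forall i, P i -> F i <= G i) ->
  \big[Rplus/0]_(i <- r | P i) F i <= \big[Rplus/0]_(i <- r | P i) G i.
Proof.
  intros H. elim: r => [|x s IH]; rewrite ?big_nil ?big_cons; first lra.
  case hx: (P x) => //. have := H x hx. lra.
Qed.

Lemma big_nonpos (F : I -> R) : (forall i, P i -> F i <= 0) ->
  \big[Rplus/0]_(i <- r | P i) F i <= 0.
Proof.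
  intros H. elim: r => [|x s IH]; rewrite ?big_nil ?big_cons; first lra.
  case hx: (P x) => //. have := H x hx. lra.
Qed.

Lemma D_big (g : I -> R -> R) (dg : I -> R) t : (forall i, P i -> is_derive (g i) t (dg i)) ->
  is_derive (fun t => \big[Rplus/0]_(i <- r | P i) g i t) t (\big[Rplus/0]_(i <- r | P i) dg i).
Proof.
  intros H. elim: r => [|x s IH].
  - rewrite big_nil. apply: (D_ext (fun _ => 0)); [move=> z; by rewrite big_nil|apply: D_const].
  - case hx: (P x).
    + rewrite big_cons hx. apply: (D_ext (fun t => g x t + \big[Rplus/0]_(i <- s | P i) g i t)).
      { move=> z. by rewrite big_cons hx. }
      apply: D_plus => //. by apply: H.
    + rewrite big_cons hx. apply: (D_ext (fun t => \big[Rplus/0]_(i <- s | P i) g i t)) => //.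
      move=> z. by rewrite big_cons hx.
Qed.

Lemma cF_big {T} {FF : (T -> Prop) -> Prop} {HF : Filter FF} (g : I -> T -> R) (y : I -> R) :
  (forall i, P i -> cF (FF:=FF) (g i) (y i)) ->
  cF (FF:=FF) (fun z => \big[Rplus/0]_(i <- r | P i) g i z) (\big[Rplus/0]_(i <- r | P i) y i).
Proof.
  intros H. elim: r => [|x s IH].
  - rewrite big_nil. apply: (cF_ext (fun _ => 0)); [move=> z; by rewrite big_nil|apply: cF_const].
  - case hx: (P x).
    + rewrite big_cons hx. apply: (cF_ext (fun z => g x z + \big[Rplus/0]_(i <- s | P i) g i z)).
      { move=> z. by rewrite big_cons hx. }
      apply: cF_plus => //. by apply: H.
    + rewrite big_cons hx. apply: (cF_ext (fun z => \big[Rplus/0]_(i <- s | P i) g i z)) => //.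
      move=> z. by rewrite big_cons hx.
Qed.
End BigR.

Lemma big_I3 (g : 'I_3 -> R) : \big[Rplus/0]_(k : 'I_3) g k = sum3 g.
Proof.
  rewrite /sum3 !big_ord_recl big_ord0.
  have -> : lift ord0 ord0 = i1 :> 'I_3 by apply: val_inj.
  have -> : lift ord0 (lift ord0 ord0) = i2 :> 'I_3 by apply: val_inj.
  have -> : ord0 = i0 :> 'I_3 by apply: val_inj.
  ring.
Qed.

Section Global.
Variables (n : nat) (F : finType) (bd : F -> 'I_3 -> 'I_n) (l0 : dart F -> R).

Definition loc (w : 'I_n -> R) (f : F) := fun m => w (bd f m).
Definition lf (f : F) := fun m => l0 (f, m).
Definition Phi (w : 'I_n -> R) := \big[Rplus/0]_(f : F) phi (lf f) (loc w f).

Lemma acosh_gt1 x : 0 < x -> 0 < 2 * acosh x -> 1 < x.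
Proof.
  intros hx h. rewrite /acosh in h. have h2 : 0 < ln (x + sqrt (x*x-1)) by lra.
  case: (Rlt_le_dec 1 x) => // hx1. exfalso.
  have hs : sqrt (x*x - 1) = 0. { apply: sqrt_neg_0. nra. }
  rewrite hs Rplus_0_r in h2. have := ln_le _ _ hx hx1. rewrite ln_1. lra.
Qed.

Lemma inW_inD w f : inW bd l0 w -> inD (lf f) (loc w f).
Proof. intros H m. apply: acosh_gt1; [apply: xf_pos | exact (H (f, m))]. Qed.

Lemma lf_pos glue f : hyperbolic_metric glue l0 -> forall m, 0 < lf f m.
Proof. move=> [h _] m. apply h. Qed.

Hypothesis hl : forall f m, 0 < lf f m.

Lemma Phi_concave : concave_on (inW bd l0) Phi.
Proof.
  move=> x y hx hy t ht. rewrite /Phi !big_scale -big_split. apply: big_le => f _.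
  apply: phi_concave => //; by apply: inW_inD.
Qed.

Lemma Phi_grad : has_gradient_on (inW bd l0) Phi (Bw bd l0).
Proof.
  move=> w hw i. rewrite /Phi.
  pose vf f m := if bd f m == i then 1 else 0.
  have e : forall s f, loc (upd w i s) f = (fun m => loc w f m + (s - w i) * vf f m).
  { move=> s f. apply: functional_extensionality => m. rewrite /loc /upd /vf.
    case: eqP => [->|_]; ring. }
  have e0 : forall f, (fun m => loc w f m + (w i - w i) * vf f m) = loc w f.
  { move=> f. apply: functional_extensionality => m. ring. }
  apply: (D_ext (fun s => \big[Rplus/0]_(f : F) phi (lf f) (fun m => loc w f m + (s - w i) * vf f m))).
  { move=> s. apply: eq_bigr => f _. by rewrite e. }
  apply: D_eq; last first.
  { apply: D_big => f _. apply: (D_comp (fun u => phi (lf f) (fun m => loc w f m + u * vf f m)) (fun s => s - w i)).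
    - apply: phi_dir => //. rewrite e0. by apply: inW_inD.
    - auto_derive => //. }
  transitivity (\big[Rplus/0]_(f:F) \big[Rplus/0]_(k:'I_3)
     (if bd f k == i then theta (lw bd l0 w) f k else 0)).
  { apply: eq_bigr => f _. have ht : forall k, theta (lw bd l0 w) f k = th (lf f) (loc w f) k by [].
    rewrite e0 big_I3 /sum3 /vf !ht.
    case: (bd f i0 == i); case: (bd f i1 == i); case: (bd f i2 == i); ring. }
  rewrite pair_bigA /Bw /Blen [RHS]big_mkcond. reflexivity.
Qed.
End Global.

Arguments lf {F}.
Arguments loc {n F}.
Arguments inW_inD {n F bd l0 w f}.
Section Flow.
Variables (n : nat) (F : finType) (bd : F -> 'I_3 -> 'I_n) (l0 : dart F -> R).
Hypothesis hl : forall f m, 0 < lf l0 f m.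
Variables (T : R) (w : R -> 'I_n -> R).
Hypothesis hW : forall t, 0 <= t < T -> inW bd l0 (w t).
Hypothesis hc0 : forall i, filterlim (fun s => w s i) (at_right 0) (locally (w 0 i)).
Hypothesis hd : forall t, 0 < t < T -> forall i, is_derive (fun s => w s i) t (Bw bd l0 (w t) i).

Definition Bt t i := Bw bd l0 (w t) i.
Definition Hx t (x : F * 'I_3) :=
  sum3 (fun m => J (lf l0 x.1) (loc bd (w t) x.1) x.2 m * Bt t (bd x.1 m)).
Definition dB t i := \big[Rplus/0]_(x : F * 'I_3 | bd x.1 x.2 == i) Hx t x.

Lemma D_B t i : 0 < t < T -> is_derive (fun t => Bt t i) t (dB t i).
Proof.
  intros ht. rewrite /Bt /dB /Bw /Blen.
  apply: (D_big _ _ _ (fun x t => th (lf l0 x.1) (loc bd (w t) x.1) x.2)) => x _.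
  apply: (D_thJ (lf l0 x.1) (fun t => loc bd (w t) x.1) t (fun m => Bt t (bd x.1 m))).
  - move=> m. apply: hd => //.
  - apply: inW_inD. apply: hW. lra.
Qed.

Definition dS t := \big[Rplus/0]_(i : 'I_n) (dB t i * Bt t i + Bt t i * dB t i).

Lemma D_S t : 0 < t < T -> is_derive (fun t => sumB2 bd l0 (w t)) t (dS t).
Proof.
  intros ht. rewrite /sumB2 /dS.
  apply: (D_big _ _ _ (fun i t => Bt t i * Bt t i)) => i _.
  apply: D_mult; by apply: D_B.
Qed.

Lemma dS_nonpos t : 0 <= t < T -> dS t <= 0.
Proof.
  intros ht. have hi : forall f, inD (lf l0 f) (loc bd (w t) f).
  { move=> f. apply: inW_inD. by apply: hW. }
  have e1 : dS t = 2 * \big[Rplus/0]_(i : 'I_n) (Bt t i * dB t i).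
  { rewrite big_scale /dS. apply: eq_bigr => i _. ring. }
  have e2 : \big[Rplus/0]_(i : 'I_n) (Bt t i * dB t i)
    = \big[Rplus/0]_(i : 'I_n) \big[Rplus/0]_(x : F * 'I_3 | bd x.1 x.2 == i) (Bt t (bd x.1 x.2) * Hx t x).
  { apply: eq_bigr => i _. rewrite /dB big_scale. apply: eq_bigr => x /eqP -> //. }
  have e3 : \big[Rplus/0]_(i : 'I_n) \big[Rplus/0]_(x : F * 'I_3 | bd x.1 x.2 == i) (Bt t (bd x.1 x.2) * Hx t x)
    = \big[Rplus/0]_(x : F * 'I_3) (Bt t (bd x.1 x.2) * Hx t x).
  { rewrite [RHS](partition_big (fun x : F * 'I_3 => bd x.1 x.2) predT) //. }
  have e4 : \big[Rplus/0]_(x : F * 'I_3) (Bt t (bd x.1 x.2) * Hx t x)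
    = \big[Rplus/0]_(f : F) \big[Rplus/0]_(k : 'I_3) (Bt t (bd f k) * Hx t (f, k)).
  { by rewrite pair_bigA. }
  rewrite e1 e2 e3 e4.
  have : \big[Rplus/0]_(f : F) \big[Rplus/0]_(k : 'I_3) (Bt t (bd f k) * Hx t (f, k)) <= 0.
  { apply: big_nonpos => f _. rewrite big_I3.
    have := J_nsd _ _ (fun m => Bt t (bd f m)) (hi f). rewrite /Hx /=. done. }
  lra.
Qed.

Hypothesis hT : 0 < T.

Lemma cS0 : cF (FF := at_right 0) (fun t => sumB2 bd l0 (w t)) (sumB2 bd l0 (w 0)).
Proof.
  rewrite /sumB2. apply: cF_big => i _. apply: cF_mult;
  (rewrite /Bw /Blen; apply: (cF_big _ _ _ (fun x t => th (lf l0 x.1) (loc bd (w t) x.1) x.2)) => x _;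
   apply: (cF_th (lf l0 x.1) (fun t => loc bd (w t) x.1) (loc bd (w 0) x.1));
   [move=> m; apply: hc0 | apply: inW_inD; apply: hW; lra]).
Qed.

Lemma mono_pos s t : 0 < s -> s <= t -> t < T -> sumB2 bd l0 (w t) <= sumB2 bd l0 (w s).
Proof.
  intros hs hst htT.
  have [c [hc e]] := mvt01 (fun t => sumB2 bd l0 (w t)) s t dS hst
    (fun c hc => D_S c ltac:(lra)).
  have := dS_nonpos c ltac:(lra). simpl in e. nra.
Qed.

Lemma mono s t : 0 <= s -> s <= t -> t < T -> sumB2 bd l0 (w t) <= sumB2 bd l0 (w s).
Proof.
  intros hs hst htT. case: (Rle_lt_or_eq_dec 0 s hs) => hs0; first by apply: mono_pos.
  subst s. case: (Rle_lt_or_eq_dec 0 t hst) => ht0; last by subst; lra.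
  apply: Rnot_lt_le => hlt.
  set S := fun t => sumB2 bd l0 (w t).
  have heps : 0 < S t - S 0 by rewrite /S; lra.
  have hloc : locally (S 0) (fun y => Rabs (y - S 0) < S t - S 0).
  { exists (mkposreal _ heps) => y /=. rewrite /ball /= /AbsRing_ball /abs /minus /plus /opp /=. done. }
  have := cS0 _ hloc. move=> [d hdd].
  pose u := Rmin (d/2) (t/2).
  have hd2 : 0 < d by apply: cond_pos.
  have hu0 : 0 < u by apply Rmin_glb_lt; lra.
  have hut : u <= t by rewrite /u; have := Rmin_r (d/2) (t/2); lra.
  have hud : u < d by rewrite /u; have := Rmin_l (d/2) (t/2); lra.
  have := hdd u. rewrite /ball /= /AbsRing_ball /abs /minus /plus /opp /=.
  rewrite Ropp_0 Rplus_0_r Rabs_pos_eq; last lra. move=> /(_ hud hu0) hb.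
  have := mono_pos u t hu0 hut htT. rewrite -/(S t) -/(S u).
  have := Rabs_def2 _ _ hb. subst S u. cbv beta in *. lra.
Qed.
End Flow.

Theorem corollary2 (n : nat) (F : finType) (glue : dart F -> dart F)
    (bd : F -> 'I_3 -> 'I_n) (l0 : dart F -> R) :
  ideal_triangulation glue bd ->
  hyperbolic_metric glue l0 ->
  (exists Phi : ('I_n -> R) -> R,
      concave_on (inW bd l0) Phi /\ has_gradient_on (inW bd l0) Phi (Bw bd l0))
  /\
  (forall (T : R) (w : R -> 'I_n -> R),
      (0 < T)%R ->
      (forall i, w 0%R i = 0%R) ->
      (forall t, (0 <= t < T)%R -> inW bd l0 (w t)) ->
      (forall i, filterlim (fun s => w s i) (at_right 0%R) (locally (w 0%R i))) ->
      (forall t, (0 < t < T)%R -> forall i,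
          is_derive (fun s => w s i) t (Bw bd l0 (w t) i)) ->
      forall s t, (0 <= s)%R -> (s <= t)%R -> (t < T)%R ->
        (sumB2 bd l0 (w t) <= sumB2 bd l0 (w s))%R).
Proof.
  intros _ hm. have hl : forall f m, 0 < lf l0 f m by move=> f m; case: hm => h _; apply h.
  split.
  - exists (Phi _ _ bd l0). split; [exact: Phi_concave | exact: Phi_grad].
  - intros T w hT _ hW hc hd s t hs hst ht. exact: (mono _ _ _ _ _ _ hW hc hd hT _ _ hs hst ht).
Qed.
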